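(* For every integer $n\ge3$, $$2^{n-3}=\sum_{(a_1,\dots,a_k)\in C(n)}(F_{a_1}-1)(F_{a_2}-1)\cdots(F_{a_k}-1),$$ where the only nonzero terms come from compositions all of whose parts exceed $2$.
   Context: $C(n)$ is the set of all compositions $(a_1,\dots,a_k)$ of $n$ (sequences of positive integers with sum $n$, any number of parts). Fibonacci numbers: $F_0=0$, $F_1=1$, $F_n=F_{n-1}+F_{n-2}$. *)

(* Defs.v *)
From mathcomp Require Import all_boot all_algebra.
Set Implicit Arguments. Unset Strict Implicit. Unset Printing Implicit Defensive.
Import GRing.Theory.

Fixpoint fib (n : nat) : nat :=
  match n with
  | 0 => 0
  | 1 => 1
  | (m.+1 as k).+1 => fib k + fib m
  end.

Definition is_composition (n : nat) (s : seq nat) : bool :=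
  all (fun a => 0 < a) s && (sumn s == n).

(* Enumeration of all compositions of n: first part a in 1..n, then a
   composition of n - a.  Defined via fuel to make termination structural. *)
Fixpoint comps_aux (fuel n : nat) : seq (seq nat) :=
  match fuel with
  | 0 => if n == 0 then [:: [::]] else [::]
  | f.+1 =>
      if n == 0 then [:: [::]]
      else flatten [seq [seq a :: s | s <- comps_aux f (n - a)] | a <- iota 1 n]
  end.

Definition compositions (n : nat) : seq (seq nat) := comps_aux n n.

Lemma compositions_small :
  compositions 3 = [:: [:: 1; 1; 1]; [:: 1; 2]; [:: 2; 1]; [:: 3]].
Proof. by []. Qed.

(* Main.v *)
Require Import Defs.
From mathcomp Require Import all_boot all_algebra zify ring lra.
Import GRing.Theory.

Lemma comps_S f n : comps_aux f.+1 n.+1 =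
  flatten [seq [seq a :: s | s <- comps_aux f (n.+1 - a)] | a <- iota 1 n.+1].
Proof. by []. Qed.

Lemma comps_fuel f g n : n <= f -> n <= g -> comps_aux f n = comps_aux g n.
Proof.
elim: f g n => [|f IH] g n.
  by rewrite leqn0 => /eqP -> _; case: g.
case: n => [|n] Hf Hg; first by case: g Hg.
case: g Hg => [//|g] Hg; rewrite !comps_S.
congr flatten; apply/eq_in_map => a; rewrite mem_iota => /andP [Ha1 Ha2].
congr map; apply: IH; rewrite leq_subLR; [apply: leq_trans Hf _ | apply: leq_trans Hg _]; rewrite -add1n; exact: leq_add Ha1 (leqnn _).
Qed.

Lemma comps_rec n : 0 < n -> compositions n =
  flatten [seq [seq a :: s | s <- compositions (n - a)] | a <- iota 1 n].
Proof.
case: n => [//|n] _; rewrite /compositions comps_S.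
congr flatten; apply/eq_in_map => a; rewrite mem_iota => /andP [Ha1 Ha2].
congr map; apply: comps_fuel => //; rewrite leq_subLR -add1n; exact: leq_add Ha1 (leqnn _).
Qed.

Lemma comps0 : compositions 0 = [:: [::]].
Proof. by []. Qed.

Lemma comps_mem n s : (s \in compositions n) = is_composition n s.
Proof.
elim/ltn_ind: n s => n IH s.
case: (posnP n) => [->|Hn].
  rewrite comps0 inE /is_composition; case: s => [//|b t] /=.
  apply/esym/negbTE; case: b => //= b; by rewrite addSn andbF.
rewrite comps_rec //; apply/flatten_mapP/idP.
  move=> [a]; rewrite mem_iota => /andP [Ha1 Ha2] /mapP [t Ht ->].
  rewrite IH in Ht; last by rewrite ltn_subrL Ha1 Hn.
  move: Ht; rewrite /is_composition /= => /andP [-> /eqP ->].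
  rewrite Ha1 /= subnKC //; by rewrite -ltnS.
case: s => [|b t]; first by rewrite /is_composition /=; case: n Hn {IH}.
rewrite /is_composition /= => /andP [/andP [Hb Ht] /eqP Hs].
exists b; first by rewrite mem_iota Hb /= -Hs add1n ltnS leq_addr.
apply/mapP; exists t => //.
rewrite IH; last by rewrite ltn_subrL Hb Hn.
by rewrite /is_composition Ht -Hs addKn eqxx.
Qed.

Lemma uniq_flat (r : seq nat) (L : nat -> seq (seq nat)) :
  uniq r -> (forall a, a \in r -> uniq (L a)) ->
  uniq (flatten [seq [seq a :: s | s <- L a] | a <- r]).
Proof.
elim: r => [//|a r IH] /= /andP [Ha Ur] UL.
rewrite cat_uniq IH ?andbT //; last by move=> b Hb; apply: UL; rewrite inE Hb orbT.
apply/andP; split.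
  rewrite map_inj_uniq ?UL ?inE ?eqxx //; by move=> x y [].
apply/hasPn => s /flatten_mapP [b Hb /mapP [t _ ->]].
apply/mapP => [[u _ [Eb _]]]; by move: Ha; rewrite -Eb Hb.
Qed.

Lemma comps_uniq n : uniq (compositions n).
Proof.
elim/ltn_ind: n => n IH.
case: (posnP n) => [->//|Hn].
rewrite comps_rec //; apply: uniq_flat; first exact: iota_uniq.
move=> a; rewrite mem_iota => /andP [Ha _]; by apply: IH; rewrite ltn_subrL Ha Hn.
Qed.

Local Open Scope ring_scope.

Definition c (a : nat) : int := (fib a)%:Z - 1.
Definition T (k : nat) : int := \sum_(1 <= a < k.+1) c a * 2 ^+ (k - a).

Lemma crec k : c k.+2 = c k.+1 + c k + 1.
Proof. rewrite /c /=. rewrite PoszD. lia. Qed.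

Lemma key k : c k.+3 + T k = 2 ^+ k.
Proof.
elim: k => [|k IH]; first by rewrite /T big_geq.
have HT : T k.+1 = 2 * T k + c k.+1.
  rewrite /T big_nat_recr //= subnn expr0 mulr1 mulr_sumr; congr (_ + _).
  apply: eq_big_nat => a /andP [_ Ha]; rewrite subSn // exprS; ring.
rewrite HT exprS -IH (crec k.+2) (crec k.+1); lia.
Qed.

Definition S (n : nat) : int := \sum_(s <- compositions n) \prod_(a <- s) c a.

Lemma S_rec n : (0 < n)%N -> S n = \sum_(1 <= a < n.+1) c a * S (n - a).
Proof.
move=> Hn; rewrite /S comps_rec // big_flatten big_map /index_iota subn1 /=.
apply: eq_bigr => a _; rewrite big_map mulr_sumr; apply: eq_bigr => s _.
by rewrite big_cons.
Qed.

Lemma S0 : S 0 = 1.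
Proof. by rewrite /S comps0 big_seq1 big_nil. Qed.

Lemma S1 : S 1 = 0.
Proof. by rewrite S_rec // big_nat1 /c /= subrr mul0r. Qed.

Lemma S2 : S 2 = 0.
Proof. by rewrite S_rec // big_nat_recr //= big_nat1 S1 /c /= subrr !mul0r addr0. Qed.

Lemma S_main n : (3 <= n)%N -> S n = 2 ^+ (n - 3).
Proof.
elim/ltn_ind: n => n IH Hn.
have [k Ek] : exists k, n = k.+3 by exists (n - 3)%N; lia.
subst n.
rewrite S_rec // big_nat_recr // big_nat_recr // big_nat_recr //=.
have E0 : (k.+3 - k.+3 = 0)%N by lia.
have E1 : (k.+3 - k.+2 = 1)%N by lia.
have E2 : (k.+3 - k.+1 = 2)%N by lia.
have -> : (k.+3 - 3 = k)%N by lia.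
rewrite E0 E1 E2 S0 S1 S2 !mulr0 !addr0 mulr1 -(key k) addrC; congr (_ + _).
rewrite /T; apply: eq_big_nat => a /andP [Ha1 Ha2].
rewrite IH; [congr (_ * 2 ^+ _); lia | lia | lia].
Qed.

Theorem mainTheorem17 (n : nat) : (3 <= n)%N ->
  uniq (compositions n) /\
  (forall s : seq nat, (s \in compositions n) = is_composition n s) /\
  (2 ^+ (n - 3) : int) =
    \sum_(s <- compositions n) \prod_(a <- s) ((fib a)%:Z - 1).
Proof.
move=> Hn; split; first exact: comps_uniq.
split; first by move=> s; exact: comps_mem.
by rewrite -S_main.
Qed.
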